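(* Let $\mathscr{A}=(Q,\{0,1\},\delta)$ be an NFA with $Q=\{q_1,\dots,q_n\}$ and let $\ell>0$ be an integer. For every $t=0,1,\dots,\ell$, every truth assignment $\varphi$ on the set $X=\{x_1,\dots,x_\ell\}$ of letter variables has a unique extension $\overline{\varphi}$ to the token variables $y_{ij}^s$ ($i,j=1,\dots,n$, $s=0,\dots,t$) that makes all clauses in $C_0$ and all formulas $\Psi_{ij}^s$ ($i,j=1,\dots,n$, $s=1,\dots,t$) true. Moreover, the token variable $y_{ij}^s$ gets value $1$ under $\overline{\varphi}$ if and only if after the moves $\varphi(x_1),\dots,\varphi(x_s)$ of the game $\Gamma$, one of the tokens held by the state $q_j$ is $\mathbf{i}$ (equivalently, $q_j\in q_i.\varphi(x_1)\cdots\varphi(x_s)$).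
   Context: An NFA is $\mathscr{A}=(Q,\Sigma,\delta)$ with $\delta\colon Q\times\Sigma\to\mathcal{P}(Q)$; $\delta$ extends to words by $\delta(X,\varepsilon)=X$ and $\delta(X,sw')=\bigcup_{q\in X}\delta(\delta(q,s),w')$, written $q.w=\delta(\{q\},w)$. The game $\Gamma$: initially each state $q_i$ holds exactly one token $\mathbf{i}$; at each move a symbol $a$ is chosen, and after the move token $\mathbf{i}$ is at state $p$ iff $p\in q.a$ for some state $q$ that held $\mathbf{i}$ just before the move (tokens at states $q$ with $q.a=\varnothing$ disappear). Variables: letter variables $x_1,\dots,x_\ell$ and token variables $y_{ij}^t$ for $i,j\in\{1,\dots,n\}$, $t\in\{0,\dots,\ell\}$. For $a\in\{0,1\}$ and $q\in Q$, let $P_a(q)=\{p\in Q\mid q\in p.a\}$. $C_0$ is the set of one-literal clauses $y_{ii}^0$ ($i=1,\dots,n$) and $\neg y_{ij}^0$ ($i\neq j$). For $t=1,\dots,\ell$ and $i,j=1,\dots,n$, $\Psi_{ij}^t$ is the propositional formula $y_{ij}^t\Longleftrightarrow\bigl(x_t\wedge\bigvee_{q_k\in P_1(q_j)}y_{ik}^{t-1}\bigr)\vee\bigl(\neg x_t\wedge\bigvee_{q_h\in P_0(q_j)}y_{ih}^{t-1}\bigr)$, where an empty disjunction is false. A truth assignment with $x_t\mapsto a$ is identified with choosing symbol $a$ at the $t$-th move. *)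

(* Defs.v *)
From mathcomp Require Import all_boot.
Set Implicit Arguments. Unset Strict Implicit. Unset Printing Implicit Defensive.

(* States q_1..q_n are represented by 'I_n (q_{i+1} ~ i); alphabet {0,1} is bool
   (false = 0, true = 1). *)
Definition nfa (n : nat) := 'I_n -> bool -> {set 'I_n}.

Definition dset n (d : nfa n) (X : {set 'I_n}) (a : bool) : {set 'I_n} :=
  \bigcup_(q in X) d q a.
Definition dword n (d : nfa n) (X : {set 'I_n}) (w : seq bool) : {set 'I_n} :=
  foldl (dset d) X w.

Definition Pre n (d : nfa n) (a : bool) (q : 'I_n) : {set 'I_n} :=
  [set p | q \in d p a].

(* a truth assignment phi on x_1..x_ell: x_t |-> phi (t-1) *)
Definition letters ell (phi : 'I_ell -> bool) : seq bool := [seq phi i | i <- enum 'I_ell].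
Definition xval ell (phi : 'I_ell -> bool) (t : nat) : bool := nth false (letters phi) t.-1.

(* y s i j : value of token variable y_{ij}^s ; clauses C_0 and formulas Psi_{ij}^s
   for s = 1..t hold *)
Definition C0_holds n (y : nat -> 'I_n -> 'I_n -> bool) : Prop :=
  (forall i, y 0 i i) /\ (forall i j, i != j -> ~~ y 0 i j).

Definition Psi_holds n (d : nfa n) ell (phi : 'I_ell -> bool)
    (y : nat -> 'I_n -> 'I_n -> bool) (s : nat) (i j : 'I_n) : Prop :=
  y s i j = (xval phi s && [exists k in Pre d true j, y s.-1 i k])
            || (~~ xval phi s && [exists h in Pre d false j, y s.-1 i h]).

Definition extension_ok n (d : nfa n) ell (phi : 'I_ell -> bool) (t : nat)
    (y : nat -> 'I_n -> 'I_n -> bool) : Prop :=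
  C0_holds y /\ (forall s i j, 1 <= s <= t -> Psi_holds d phi y s i j).

(* Main.v *)
Require Import Defs.
From mathcomp Require Import all_boot.
Set Implicit Arguments. Unset Strict Implicit.

Lemma step_mem n (d : nfa n) ell (phi : 'I_ell -> bool) (s : nat) (i j : 'I_n) :
  0 < s <= ell ->
  (j \in dword d [set i] (take s (letters phi))) =
  [exists k in Pre d (xval phi s) j, k \in dword d [set i] (take s.-1 (letters phi))].
Proof.
case: s => [//|s] /= Hs.
have Hsz : s < size (letters phi) by rewrite /letters size_map size_enum_ord.
rewrite (take_nth false Hsz) /dword foldl_rcons /dset /xval /=.
apply/bigcupP/existsP.
- move=> [k Hk Hj]; exists k; apply/andP; split => //; by rewrite inE.
- move=> [k /andP [Hk Hj]]; exists k => //; by rewrite inE in Hk.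
Qed.

Lemma psi_char n (d : nfa n) ell (phi : 'I_ell -> bool) y s i j :
  Psi_holds d phi y s i j ->
  y s i j = [exists k in Pre d (xval phi s) j, y s.-1 i k].
Proof. by rewrite /Psi_holds; case: (xval phi s) => /= ->; rewrite ?orbF. Qed.

Lemma charact n (d : nfa n) ell (phi : 'I_ell -> bool) (t : nat) (ht : t <= ell) y :
  extension_ok d phi t y ->
  forall s i j, s <= t -> y s i j = (j \in dword d [set i] (take s (letters phi))).
Proof.
move=> [[H0 H0'] HP]; elim=> [|s IH] i j Hs.
- rewrite take0 /dword /= inE.
  case: eqP => [->|/eqP Hne]; first exact: H0.
  by apply/negbTE/H0'; rewrite eq_sym.
- rewrite (psi_char (HP s.+1 i j _)); last by rewrite Hs.
  rewrite step_mem; last by rewrite /= (leq_trans Hs ht).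
  apply: eq_existsb => k; rewrite IH //; exact: ltnW.
Qed.

Theorem lemma2 (n : nat) (d : nfa n) (ell : nat) (hell : 0 < ell)
    (t : nat) (ht : t <= ell) (phi : 'I_ell -> bool) :
  (exists y, extension_ok d phi t y) /\
  (forall y1 y2, extension_ok d phi t y1 -> extension_ok d phi t y2 ->
     forall s i j, s <= t -> y1 s i j = y2 s i j) /\
  (forall y, extension_ok d phi t y ->
     forall s i j, s <= t ->
       y s i j = (j \in dword d [set i] (take s (letters phi)))).
Proof.
split; last split.
- exists (fun s i j => j \in dword d [set i] (take s (letters phi))).
  split; first split.
  + by move=> i; rewrite take0 /dword /= inE.
  + by move=> i j Hne; rewrite take0 /dword /= inE eq_sym.
  + move=> s i j /andP [H1 H2]; rewrite /Psi_holds step_mem; last by rewrite H1 (leq_trans H2 ht).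
    by case: (xval phi s); rewrite /= ?orbF.
- move=> y1 y2 H1 H2 s i j Hs.
  by rewrite (charact ht H1) // (charact ht H2).
- exact: charact.
Qed.
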